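(* Let $m\ge1$ be an integer and $\mathcal{U}=\{S_0,S_{2,1^0},\ldots,S_{2,1^{m-1}}\}$. Define vectors $(y_0,\ldots,y_m)\in\mathbb{R}^{m+1}$: $\mathbf{d}_{1,m}=(1,0,\ldots,0)$; $\mathbf{d}_{2,m}=(1,1,\ldots,1)$; $\mathbf{d}_{3,m}$ with $y_0=1,y_1=2$ and $y_k=k$ for $k\ge2$; $\mathbf{d}_{4,m}$ with $y_0=1$ and $y_k=k+2$ for $k\ge1$; $\mathbf{d}_{5,m}$ with $y_0=2,y_1=4$ and $y_k=2k+1$ for $k\ge2$. Then $\mathbf{d}_{j,m}\in\operatorname{trop}(\mathcal{N}_{\mathcal{U}})$ for each $1\le j\le5$.
   Context: All graphs are finite; $\hom(H;G)$ is the number of graph homomorphisms from $H$ to $G$. $S_0$ is a single vertex; for $k\ge0$, $S_{2,1^k}$ is the tree with vertex set $\{1,\ldots,k+3\}$ and edge set $\{\{1,j\}:2\le j\le k+2\}\cup\{\{k+2,k+3\}\}$. $\mathcal{N}_{\mathcal{U}}$ is the set of vectors $(\hom(S_0;G),\hom(S_{2,1^0};G),\ldots,\hom(S_{2,1^{m-1}};G))$ over all graphs $G$; $\operatorname{trop}(\mathcal{N}_{\mathcal{U}})=\lim_{\tau\to\infty}\log_\tau(\mathcal{N}_{\mathcal{U}}\cap\mathbb{R}^{m+1}_{>0})$ (coordinatewise logarithm), which equals the closure of the conical hull of the coordinatewise logarithms of the points of $\mathcal{N}_{\mathcal{U}}$ with all coordinates positive. *)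

(* Defs.v *)
From mathcomp Require Import all_boot.
From Stdlib Require Import Reals.

Set Implicit Arguments.
Unset Strict Implicit.
Unset Printing Implicit Defensive.

Definition simple_graph (V : finType) (e : rel V) : Prop :=
  (forall x y, e x y = e y x) /\ (forall x, e x x = false).

Definition hom (VH VG : finType) (eH : rel VH) (eG : rel VG) : nat :=
  #|[set f : {ffun VH -> VG} |
      [forall x, forall y, eH x y ==> eG (f x) (f y)]]|.

Definition S0_edge : rel 'I_1 := fun _ _ => false.

(* S_{2,1^k} on vertices {0,...,k+2} (0-indexed version of {1,...,k+3}):
   edges {0,j} for 1 <= j <= k+1, and {k+1,k+2}. *)
Definition S21_edge (k : nat) : rel 'I_(k + 3) := fun x y =>
  let a := nat_of_ord x in let b := nat_of_ord y in
  [|| (a == 0) && (1 <= b <= k + 1),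
      (b == 0) && (1 <= a <= k + 1),
      (a == k + 1) && (b == k + 2)
    | (b == k + 1) && (a == k + 2)].

Definition homvec (n : nat) (eG : rel 'I_n) (i : nat) : nat :=
  match i with
  | 0 => hom S0_edge eG
  | k.+1 => hom (@S21_edge k) eG
  end.

(* Vectors of R^{m+1} are represented as functions nat -> R, only the
   coordinates 0..m being relevant. *)

(* x is the coordinatewise log of a point of N_U with all coordinates
   positive (G ranges over finite simple graphs, w.l.o.g. on 'I_n). *)
Definition log_point (m : nat) (x : nat -> R) : Prop :=
  exists (n : nat) (eG : rel 'I_n), simple_graph eG /\
    forall i, i <= m -> (0 < homvec eG i)%N /\ x i = ln (INR (homvec eG i)).

Definition lincomb (l : list (R * (nat -> R))) (i : nat) : R :=
  List.fold_right (fun cp acc => (fst cp * snd cp i + acc)%R) 0%R l.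

Definition in_cone (m : nat) (y : nat -> R) : Prop :=
  exists l : list (R * (nat -> R)),
    (forall cp, List.In cp l -> (0 <= fst cp)%R /\ log_point m (snd cp)) /\
    forall i, i <= m -> y i = lincomb l i.

(* trop(N_U): Euclidean closure (in R^{m+1}) of the conical hull. *)
Definition trop_NU (m : nat) (d : nat -> R) : Prop :=
  forall eps : R, (0 < eps)%R -> exists y, in_cone m y /\
    forall i, i <= m -> (Rabs (y i - d i) < eps)%R.

Definition dvec (j : nat) (i : nat) : R :=
  match j with
  | 1 => if i == 0 then 1%R else 0%R
  | 2 => 1%R
  | 3 => if i == 0 then 1%R else if i == 1 then 2%R else INR i
  | 4 => if i == 0 then 1%R else (INR i + 2)%R
  | 5 => if i == 0 then 2%R else if i == 1 then 4%R else (2 * INR i + 1)%R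
  | _ => 0%R
  end.

(* Main.v *)
Require Import Defs.
From mathcomp Require Import all_boot zify.
From Stdlib Require Import Reals Lra.

Set Implicit Arguments.
Unset Strict Implicit.


Definition deg (V : finType) (e : rel V) (v : V) : nat := #|[pred u | e v u]|.

Definition Fn (V : finType) (e : rel V) (k : nat) (v w : V) (n : nat) : pred V :=
  if n == 0 then pred1 v else if n == k+1 then [pred y | (y == w) && e v w]
  else if n == k+2 then [pred y | e w y] else [pred y | e v y].

Lemma memA (V : finType) (e : rel V) (esym : forall x y, e x y = e y x) (k : nat) (o0 o1 : 'I_(k+3)) (ho0 : nat_of_ord o0 = 0) (ho1 : nat_of_ord o1 = k+1) (v w : V) (f : {ffun 'I_(k+3) -> V}) :
  ([forall x, forall y, S21_edge x y ==> e (f x) (f y)] && (f o0 == v)) && (f o1 == w)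
  = (f \in finfun.family (fun x : 'I_(k+3) => Fn e k v w x)).
Proof.
apply/idP/idP.
  move=> /andP[/andP[/forallP H /eqP f0] /eqP f1]; apply/familyP => x.
  have Hxy : forall x y, S21_edge x y -> e (f x) (f y).
    by move=> a b Hab; move/forallP: (H a) => /(_ b) /implyP; apply.
  rewrite /Fn; case: eqP => [x0|xn0].
    have -> : x = o0 by apply: val_inj; rewrite /= x0 ho0.
    by rewrite inE f0.
  case: eqP => [x1|xn1].
    have -> : x = o1 by apply: val_inj; rewrite /= x1 ho1.
    rewrite inE /= f1 eqxx /= -f0 -f1; apply: Hxy.
    by rewrite /S21_edge ho0 ho1; apply/orP; left; lia.
  case: eqP => [x2|xn2].
    rewrite inE /= -f1; apply: Hxy.
    by rewrite /S21_edge ho1 x2; lia.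
  rewrite inE /= -f0; apply: Hxy.
  rewrite /S21_edge ho0; apply/orP; left.
  have := ltn_ord x; move/eqP: xn0; move/eqP: xn1; move/eqP: xn2; lia.
move/familyP => H.
have Hv : forall x : 'I_(k+3), nat_of_ord x = 0 -> f x = v.
  by move=> x x0; have := H x; rewrite /Fn x0 eqxx inE => /eqP.
have Hw : forall x : 'I_(k+3), nat_of_ord x = k+1 -> f x = w /\ e v w.
  move=> x x1; have := H x; rewrite /Fn x1.
  have -> : (k + 1 == 0) = false by lia.
  rewrite eqxx inE /=.
  by move=> /andP[/eqP -> ->].
have H2 : forall x : 'I_(k+3), nat_of_ord x = k+2 -> e w (f x).
  move=> x x2; have := H x; rewrite /Fn x2.
  have -> : (k + 2 == 0) = false by lia.
  have -> : (k + 2 == k + 1) = false by lia.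
  by rewrite eqxx inE.
have Hl : forall x : 'I_(k+3), 1 <= x <= k+1 -> e v (f x).
  move=> x xr.
  case: (altP (nat_of_ord x =P k+1)) => [x1|xn1].
    by case: (Hw x x1) => -> .
  have := H x; rewrite /Fn.
  have -> : (nat_of_ord x == 0) = false by lia.
  rewrite (negbTE xn1).
  have -> : (nat_of_ord x == k+2) = false by lia.
  by rewrite inE.
rewrite (Hv o0 ho0) eqxx andbT.
have [-> _] := Hw o1 ho1; rewrite eqxx andbT.
apply/forallP => x; apply/forallP => y; apply/implyP.
rewrite /S21_edge => /or4P [] /andP [Ha Hb].
- by rewrite (Hv x (eqP Ha)); apply: Hl.
- by rewrite (Hv y (eqP Ha)) esym; apply: Hl.
- by have [-> _] := Hw x (eqP Ha); apply: H2; apply/eqP.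
- by have [-> _] := Hw y (eqP Ha); rewrite esym; apply: H2; apply/eqP.
Qed.




Lemma prodE (T : finType) (g : T -> nat) : foldr muln 1 [seq g x | x : T] = \prod_x g x.
Proof. by rewrite foldrE big_image. Qed.

Lemma prodFn (V : finType) (e : rel V) k v w :
  \prod_(x : 'I_(k+3)) #|Fn e k v w x| = e v w * deg e w * expn (deg e v) k.
Proof.
rewrite -(big_mkord xpredT (fun i => #|Fn e k v w i|)).
have -> : k + 3 = (k + 1).+2 by lia.
rewrite big_nat_recr // big_nat_recr // big_ltn //=.
rewrite /Fn eqxx.
have -> : (k + 1 == 0) = false by lia.
have -> : ((k + 1).+1 == 0) = false by lia.
have -> : ((k + 1).+1 == k + 1) = false by lia.
have -> : ((k + 1).+1 == k + 2) by lia.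
rewrite eqxx card1.
rewrite (@eq_big_nat _ _ _ 1 (k+1) _ (fun _ => deg e v)); last first.
  move=> i /andP[i1 i2].
  have -> : (i == 0) = false by lia.
  have -> : (i == k + 1) = false by lia.
  by have -> : (i == k + 2) = false by lia.
rewrite prod_nat_const_nat.
have -> : k + 1 - 1 = k by lia.
  case: (e v w) => /=.
    have -> : #|[pred y | y == w & true]| = 1 by rewrite -(card1 w); apply: eq_card => y; rewrite !inE /= ?andbT.
    by rewrite /deg !mul1n muln1 mulnC.
  rewrite (@eq_card _ _ pred0) ?card0 //=; last by move=> y; rewrite !inE /= ?andbF.
  by rewrite muln0 mul0n.
by lia.
Qed.

Lemma homS21 (V : finType) (e : rel V) (esym : forall x y, e x y = e y x) (k : nat) :
  hom (@S21_edge k) e = \sum_v \sum_w e v w * deg e w * expn (deg e v) k.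
Proof.
have h0 : 0 < k + 3 by lia.
have h1 : k + 1 < k + 3 by lia.
rewrite /hom cardsE -sum1_card.
rewrite (partition_big (fun f : {ffun 'I_(k+3) -> V} => f (Ordinal h0)) xpredT) //=.
apply: eq_bigr => v _.
rewrite (partition_big (fun f : {ffun 'I_(k+3) -> V} => f (Ordinal h1)) xpredT) //=.
apply: eq_bigr => w _.
rewrite sum1dep_card.
rewrite (eq_card (B := finfun.family (fun x : 'I_(k+3) => Fn e k v w x))); last first.
  move=> f; rewrite inE; exact: (memA esym (o0 := Ordinal h0) (o1 := Ordinal h1)).
by rewrite card_family prodE prodFn.
Qed.


Lemma homS0 (V : finType) (e : rel V) : hom S0_edge e = #|V|.
Proof.
rewrite /hom (eq_card (B := predT)); first by rewrite card_ffun card_ord expn1.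
by move=> f; rewrite !inE; apply/forallP => x; apply/forallP.
Qed.

Lemma hom_iso (VH V1 V2 : finType) (eH : rel VH) (e1 : rel V1) (e2 : rel V2)
  (g : V1 -> V2) (gi : V2 -> V1) (gK : cancel g gi) (giK : cancel gi g)
  (he : forall x y, e1 x y = e2 (g x) (g y)) : hom eH e1 = hom eH e2.
Proof.
rewrite /hom.
set A1 := [set f : {ffun VH -> V1} | _].
set A2 := [set f : {ffun VH -> V2} | _].
have inj : injective (fun f : {ffun VH -> V1} => [ffun x => g (f x)]).
  move=> f1 f2 /ffunP H; apply/ffunP => x; have := H x; rewrite !ffunE.
  by move/(can_inj gK).
rewrite -(card_imset A1 inj); apply: eq_card => f2.
apply/imsetP/idP.
  move=> [f1 Hf1 ->]; move: Hf1; rewrite !inE => /forallP H.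
  apply/forallP => x; apply/forallP => y; rewrite !ffunE -he.
  by move/forallP: (H x) => /(_ y).
move=> Hf2; exists [ffun x => gi (f2 x)].
  move: Hf2; rewrite !inE => /forallP H.
  apply/forallP => x; apply/forallP => y; rewrite !ffunE he !giK.
  by move/forallP: (H x) => /(_ y).
by apply/ffunP => x; rewrite !ffunE giK.
Qed.

Definition hvT (T : finType) (e : rel T) (i : nat) : nat :=
  match i with
  | 0 => #|T|
  | k.+1 => \sum_v \sum_w e v w * deg e w * expn (deg e v) k
  end.

Lemma realize (T : finType) (e : rel T) : simple_graph e ->
  exists n (eG : rel 'I_n), simple_graph eG /\ forall i, homvec eG i = hvT e i.
Proof.
move=> [esym eirr].
exists #|T|, (fun x y => e (enum_val x) (enum_val y)); split.
  by split => [x y|x]; [rewrite esym | rewrite eirr].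
have iso : forall (VH : finType) (eH : rel VH),
    hom eH (fun x y : 'I_#|T| => e (enum_val x) (enum_val y)) = hom eH e.
  move=> VH eH. exact: (@hom_iso VH _ T eH _ e enum_val enum_rank (@enum_valK T) (@enum_rankK T)).
case => [|k] /=.
  by rewrite iso homS0.
by rewrite iso homS21.
Qed.


Lemma INR_expn (N a : nat) : INR (expn N a) = (INR N ^ a)%R.
Proof.
elim: a => [|a IH]; first by rewrite expn0.
by rewrite expnS -multE mult_INR IH /=.
Qed.

Lemma ln_le (x y : R) : (0 < x)%R -> (x <= y)%R -> (ln x <= ln y)%R.
Proof.
move=> x0 [xy|->]; last exact: Rle_refl.
by apply: Rlt_le; apply: ln_increasing.
Qed.

Lemma INR_muln (x y : nat) : INR (x * y) = (INR x * INR y)%R.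
Proof. by rewrite -multE mult_INR. Qed.

Lemma INR_leq (x y : nat) : x <= y -> (INR x <= INR y)%R.
Proof. by move/leP; apply: le_INR. Qed.

Lemma ln_bound (h N a B : nat) : 0 < N -> 0 < B ->
  expn N a <= h * B -> h <= B * expn N a ->
  (Rabs (ln (INR h) - INR a * ln (INR N)) <= ln (INR B))%R.
Proof.
move=> N0 B0 H1 H2.
have hpos : 0 < h.
  case: h H1 H2 => // H1 _; move: H1; rewrite mul0n leqn0 expn_eq0; lia.
have Np : (0 < INR N)%R by apply: lt_0_INR; apply/ltP.
have Bp : (0 < INR B)%R by apply: lt_0_INR; apply/ltP.
have hp : (0 < INR h)%R by apply: lt_0_INR; apply/ltP.
have Nap : (0 < INR N ^ a)%R by apply: pow_lt.
have e : (INR a * ln (INR N) = ln (INR N ^ a))%R by rewrite ln_pow.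
rewrite e.
have L1 : (ln (INR N ^ a) <= ln (INR h) + ln (INR B))%R.
  rewrite -ln_mult //; apply: ln_le => //.
  by rewrite -INR_expn -INR_muln; apply: INR_leq.
have L2 : (ln (INR h) <= ln (INR B) + ln (INR N ^ a))%R.
  rewrite -ln_mult //; apply: ln_le => //.
  by rewrite -INR_expn -INR_muln; apply: INR_leq.
apply: Rabs_le; lra.
Qed.

Lemma family_trop (m : nat) (a : nat -> nat) (d : nat -> R) (B : nat) :
  0 < B -> (forall i, i <= m -> d i = INR (a i)) ->
  (forall L0 : R, exists (N : nat) (T : finType) (e : rel T),
      simple_graph e /\ (L0 < ln (INR N))%R /\ 0 < N /\
      forall i, i <= m -> expn N (a i) <= hvT e i * B /\ hvT e i <= B * expn N (a i)) ->
  trop_NU m d.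
Proof.
move=> B0 hd H eps eps0.
set C := ln (INR B).
have C0 : (0 <= C)%R.
  rewrite /C -ln_1; apply: ln_le; first lra.
  by rewrite -/(INR 1); apply: INR_leq.
have [N [T [e [se [LN [N0 Hb]]]]]] := H (C / eps)%R.
have [n [eG [sG hv]]] := realize se.
set L := ln (INR N).
have CL : (C / eps * eps = C)%R by field; lra.
have Lp : (0 < L)%R.
  apply: (Rle_lt_trans _ (C / eps)); last exact: LN.
  apply: Rmult_le_pos => //; apply: Rlt_le; apply: Rinv_0_lt_compat; lra.
set x := fun i => ln (INR (homvec eG i)).
exists (lincomb [:: ((/ L)%R, x)]); split.
  exists [:: ((/ L)%R, x)]; split => // cp [<-|//]; split.
    by apply: Rlt_le; apply: Rinv_0_lt_compat.
  exists n, eG; split => // i im; split => //.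
  have [H1 _] := Hb i im; rewrite hv.
  move: H1; case: (hvT e i) => //; rewrite mul0n leqn0 expn_eq0; lia.
move=> i im.
have [H1 H2] := Hb i im.
have lb := ln_bound (a := a i) N0 B0 H1 H2.
rewrite /lincomb /= /x hv (hd i im) Rplus_0_r.
have -> : (/ L * ln (INR (hvT e i)) - INR (a i) = / L * (ln (INR (hvT e i)) - INR (a i) * L))%R.
  by field; lra.
rewrite Rabs_mult Rabs_inv (Rabs_pos_eq L); last lra.
apply: (Rle_lt_trans _ (/ L * C)).
  apply: Rmult_le_compat_l => //; apply: Rlt_le; apply: Rinv_0_lt_compat; lra.
have : (C < eps * L)%R.
  rewrite -CL. rewrite (Rmult_comm eps); apply: Rmult_lt_compat_r => //.
have -> : (/ L * C = C / L)%R by field; lra.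
move=> HC; apply: (Rmult_lt_reg_r L) => //.
rewrite /Rdiv Rmult_assoc Rinv_l; lra.
Qed.


Lemma sum_option (T : finType) (F : option T -> nat) :
  \sum_(x : option T) F x = F None + \sum_(x : T) F (Some x).
Proof.
rewrite (bigD1 None) //=; congr (_ + _).
rewrite (reindex_omap Some (fun x : option T => x)) //=.
  by apply: eq_bigl => x; rewrite eqxx.
by case.
Qed.

Lemma deg_sum (V : finType) (e : rel V) v : deg e v = \sum_u (e v u : nat).
Proof.
rewrite /deg -sum1_card big_mkcond /=; apply: eq_bigr => u _.
by rewrite inE; case: (e v u).
Qed.

Definition star_e (N : nat) : rel (option 'I_N) := fun x y =>
  match x, y with None, Some _ | Some _, None => true | _, _ => false end.

Lemma star_simple N : simple_graph (star_e (N:=N)).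
Proof. by split => [[x|] [y|]|[x|]]. Qed.

Lemma star_hv N k : hvT (star_e (N:=N)) k.+1 = N * expn N k + N * N.
Proof.
have dN : deg (star_e (N:=N)) None = N.
  by rewrite deg_sum sum_option /= sum_nat_const card_ord muln1.
have d1 : forall i, deg (star_e (N:=N)) (Some i) = 1.
  by move=> i; rewrite deg_sum sum_option /= big1.
rewrite /= sum_option sum_option /= dN.
  rewrite (eq_bigr (fun _ => expn N k)); last by move=> i _; rewrite d1 !mul1n.
rewrite sum_nat_const card_ord.
rewrite (eq_bigr (fun _ => N)); last first.
  by move=> i _; rewrite sum_option /= dN d1 exp1n big1 //; lia.
by rewrite sum_nat_const card_ord; lia.
Qed.


Definition K_e (N : nat) : rel (option 'I_N) := fun x y => x != y.

Lemma K_simple N : simple_graph (K_e (N:=N)).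
Proof. by split => [x y|x]; rewrite /K_e ?eqxx // eq_sym. Qed.

Lemma K_hv N k : hvT (K_e (N:=N)) k.+1 = N.+1 * (N * (N * expn N k)).
Proof.
have dK : forall v, deg (K_e (N:=N)) v = N.
  move=> v; rewrite /deg (eq_card (B := predC1 v)); last by move=> u; rewrite !inE eq_sym.
  by rewrite cardC1 card_option card_ord.
rewrite /=.
rewrite (eq_bigr (fun _ => N * (N * expn N k))); last first.
  move=> v _; rewrite (eq_bigr (fun w => K_e v w * (N * expn N k))); last first.
    by move=> w _; rewrite !dK mulnA.
  by rewrite -big_distrl /= -deg_sum dK.
by rewrite sum_nat_const card_option card_ord.
Qed.

Definition E1_e (N : nat) : rel (option (option 'I_N)) := fun x y =>
  match x, y with None, Some None | Some None, None => true | _, _ => false end.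

Lemma E1_simple N : simple_graph (E1_e (N:=N)).
Proof. by split => [[[x|]|] [[y|]|]|[[x|]|]]. Qed.

Lemma E1_hv N k : hvT (E1_e (N:=N)) k.+1 = 2.
Proof.
have d0 : deg (E1_e (N:=N)) None = 1.
  by rewrite deg_sum sum_option sum_option /= big1.
have d1 : deg (E1_e (N:=N)) (Some None) = 1.
  by rewrite deg_sum sum_option sum_option /= big1.
rewrite /= sum_option sum_option /= !sum_option /=.
rewrite !big1 //= ?d0 ?d1 ?exp1n //.
  by move=> i _; rewrite !sum_option /= big1.
Qed.

Definition M_e (N : nat) : rel ('I_N * bool) := fun x y => (x.1 == y.1) && (x.2 != y.2).

Lemma M_simple N : simple_graph (M_e (N:=N)).
Proof.
split => [[x b] [y c]|[x b]]; rewrite /M_e /= ?eqxx //.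
by rewrite eq_sym (eq_sym b).
Qed.

Lemma M_hv N k : hvT (M_e (N:=N)) k.+1 = N * 2.
Proof.
have dM : forall v, deg (M_e (N:=N)) v = 1.
  move=> [x b]; rewrite /deg (eq_card (B := pred1 (x, ~~ b))) ?card1 //.
  move=> [y c]; rewrite !inE /M_e /= xpair_eqE eq_sym.
  by case: b; case: c.
rewrite /=.
rewrite (eq_bigr (fun _ => 1)); last first.
  move=> v _; rewrite (eq_bigr (fun w => (M_e v w : nat))); last first.
    by move=> w _; rewrite !dM exp1n !muln1.
  by rewrite -deg_sum dM.
by rewrite sum_nat_const card_prod card_ord card_bool muln1.
Qed.


Lemma sumbE (T : finType) (P : pred T) : \sum_u (P u : nat) = #|[set u | P u]|.
Proof.
rewrite -sum1dep_card [RHS]big_mkcond /=; apply: eq_bigr => u _.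
by case: (P u).
Qed.

Definition C_e (N : nat) : rel (option ('I_N * 'I_N)) := fun x y =>
  match x, y with
  | None, Some _ | Some _, None => true
  | Some p, Some q => (p.1 == q.1) && (p.2 != q.2)
  | None, None => false
  end.

Lemma C_simple N : simple_graph (C_e (N:=N)).
Proof.
split => [[p|] [q|]|[p|]] //=; first by rewrite eq_sym (eq_sym p.2).
by case: p => a b /=; rewrite !eqxx.
Qed.

Lemma C_hv N k : 0 < N -> hvT (C_e (N:=N)) k.+1 =
  N * N * (N * expn (N * N) k) + N * N * ((N * N + N.-1 * N) * expn N k).
Proof.
move=> N0.
have dN : deg (C_e (N:=N)) None = N * N.
  by rewrite deg_sum sum_option /= sum_nat_const card_prod card_ord muln1.
have cS : forall p : 'I_N * 'I_N, \sum_q (((p.1 == q.1) && (p.2 != q.2)) : nat) = N.-1.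
  move=> p; rewrite sumbE.
  rewrite (eq_card (B := setX [set p.1] [set~ p.2])).
    by rewrite cardsX cards1 cardsC1 card_ord mul1n.
  by move=> [a b]; rewrite !inE /= eq_sym (eq_sym b).
have dS : forall p, deg (C_e (N:=N)) (Some p) = N.
  by move=> p; rewrite deg_sum sum_option /= cS; lia.
rewrite /= sum_option sum_option /= dN.
rewrite (eq_bigr (fun _ => N * expn (N * N) k)); last by move=> q _; rewrite dS mul1n.
rewrite sum_nat_const card_prod card_ord.
rewrite (eq_bigr (fun _ => (N * N + N.-1 * N) * expn N k)); last first.
  move=> p _; rewrite sum_option /= dN dS.
  rewrite (eq_bigr (fun q => ((p.1 == q.1) && (p.2 != q.2) : nat) * (N * expn N k))); last first.
    by move=> q _; rewrite dS mulnA.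
  rewrite -big_distrl /= cS.
  lia.
by rewrite sum_nat_const card_prod card_ord.
Qed.


Lemma bigN (L0 : R) : exists N : nat, 0 < N /\ (L0 < ln (INR N))%R.
Proof.
have [n Hn] := INR_unbounded (exp L0).
exists n.+1; split => //.
rewrite -{1}(ln_exp L0); apply: ln_increasing; first exact: exp_pos.
rewrite S_INR; lra.
Qed.

Lemma INR2 : INR 2 = 2%R.
Proof. simpl; lra. Qed.

Lemma d1_ok m : trop_NU m (dvec 1).
Proof.
apply: (@family_trop m (fun i => if i == 0 then 1 else 0) _ 3) => //.
  by case.
move=> L0; have [N [N0 LN]] := bigN L0.
exists N, _, (E1_e (N:=N)); split; first exact: E1_simple.
split => //; split => // [[|k]] _.
  rewrite /= !card_option card_ord; lia.
by rewrite E1_hv.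
Qed.

Lemma d2_ok m : trop_NU m (dvec 2).
Proof.
apply: (@family_trop m (fun i => 1) _ 2) => //.
move=> L0; have [N [N0 LN]] := bigN L0.
exists N, _, (M_e (N:=N)); split; first exact: M_simple.
split => //; split => // [[|k]] _.
  rewrite /= card_prod card_ord card_bool; lia.
rewrite M_hv /=; lia.
Qed.

Lemma d3_ok m : trop_NU m (dvec 3).
Proof.
apply: (@family_trop m (fun i => if i == 0 then 1 else if i == 1 then 2 else i) _ 2) => //.
  by case => [|[|i]] //= _; rewrite INR2.
move=> L0; have [N [N0 LN]] := bigN L0.
exists N, _, (star_e (N:=N)); split; first exact: star_simple.
split => //; split => // [[|[|k]]] _.
- rewrite /= card_option card_ord expn1; lia.
- rewrite star_hv /= expn0 !muln1 expnS expn1; nia.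
- rewrite star_hv /=.
  have P0 : 0 < expn N k by rewrite expn_gt0 N0.
  rewrite !expnS; nia.
Qed.

Lemma d4_ok m : trop_NU m (dvec 4).
Proof.
apply: (@family_trop m (fun i => if i == 0 then 1 else i + 2) _ 2) => //.
  case => [|i] // _.
  change (INR i.+1 + 2 = INR (i.+1 + 2))%R; rewrite -plusE plus_INR INR2 //.
move=> L0; have [N [N0 LN]] := bigN L0.
exists N, _, (K_e (N:=N)); split; first exact: K_simple.
split => //; split => // [[|k]] _.
- rewrite /= card_option card_ord expn1; lia.
- rewrite K_hv /=.
  have P0 : 0 < expn N k by rewrite expn_gt0 N0.
  rewrite addn2 !expnS; nia.
Qed.

Lemma d5_ok m : trop_NU m (dvec 5).
Proof.
apply: (@family_trop m (fun i => if i == 0 then 2 else if i == 1 then 4 else 2 * i + 1) _ 3) => //.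
  case => [|[|i]] // _; first by simpl; lra.
  change (2 * INR i.+2 + 1 = INR (2 * i.+2 + 1))%R.
  rewrite -plusE -multE plus_INR mult_INR INR2 /=; lra.
move=> L0; have [N [N0 LN]] := bigN L0.
exists N, _, (C_e (N:=N)); split; first exact: C_simple.
split => //; split => // [[|[|k]]] _.
- rewrite /= card_option card_prod card_ord !expnS expn0; nia.
- rewrite C_hv //= !expnS !expn0; nia.
- rewrite C_hv //=.
  have P0 : 0 < expn N k by rewrite expn_gt0 N0.
  have E : 2 * k.+2 + 1 = (k + k) + 5 by lia.
  rewrite expnMn E !expnD !expnS expn0 /=.
  set P := expn N k in P0 *.
  clearbody P. have [M HM] : exists M, N = M.+1 by exists N.-1; lia.
  subst N => /=. split; nia.
Qed.

Unset Implicit Arguments.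
Set Strict Implicit.

Theorem lemma4p2 (m : nat) (hm : 1 <= m) (j : nat) (hj : 1 <= j <= 5) :
  trop_NU m (dvec j).
Proof.
case/andP: hj; case: j => [|[|[|[|[|[|j]]]]]] // _ _.
- exact: d1_ok.
- exact: d2_ok.
- exact: d3_ok.
- exact: d4_ok.
- exact: d5_ok.
Qed.
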